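(* Let $\lambda$ be a partition with $d$ distinct part sizes and parameters $(h_1,\dots,h_d)$, $(v_1,\dots,v_d)$. Define $p^{\rm col}_{r,s}(q,t)=p_{r,s}(q^{-1},t^{-1})$ and $\overline{p}^{\rm col}_{r,s}(q,t)=\overline{p}_{r,s}(q^{-1},t^{-1})$. Then for $0\le s\le d$, \[ p^{\rm col}_{r,s}(q,t)=\begin{cases}q^{h_{s+1,d}}\alpha_s&r=0,\\ \tau^{\rm col}_{r,s}\dfrac{\alpha_s\beta_r}{\gamma'_{r,s}}&1\le r\le d,\end{cases}\qquad \overline{p}^{\rm col}_{r,s}(q,t)=\begin{cases}q^{h_{s+1,d}}\overline{\alpha}_s&r=0,\\ \tau^{\rm col}_{r,s}\dfrac{\overline{\alpha}_s\overline{\beta}_r}{\gamma'_{r,s}}&1\le r\le d,\end{cases} \] where (all of $\alpha_s,\overline{\alpha}_s,\beta_r,\overline{\beta}_r,\gamma'_{r,s}$ evaluated at $(q,t)$) $\tau^{\rm col}_{r,s}=q^{-1+h_{r,s}}t^{1+2v_{r+1,s}}$ if $0<r\le s$, and $\tau^{\rm col}_{r,s}=q^{h_{s+1,r-1}}$ if $r>s$.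
   Context: Partitions are Young diagrams in French convention (cells $(x,y)\in\mathbb{Z}_{>0}^2$, $x\le\lambda_y$), $\lambda'$ the conjugate; for $c=(x,y)\in\lambda$, $a_\lambda(c)=\lambda_y-x$, $\ell_\lambda(c)=\lambda'_x-y$; $n(\kappa)=\sum_{c\in\kappa}\ell_\kappa(c)$, $n'(\kappa)=\sum_{c\in\kappa}a_\kappa(c)$, $n(\rho/\kappa)=n(\rho)-n(\kappa)$, $n'(\rho/\kappa)=n'(\rho)-n'(\kappa)$. For $\kappa\subseteq\rho$, $\mathcal{R}_{\rho/\kappa}$ (resp. $\mathcal{C}_{\rho/\kappa}$): cells of $\kappa$ in a row (resp. column) containing a cell of $\rho/\kappa$. $[i,j]=1-q^it^j$, $[i,j]^+=[i+1,j-1]$, $[i,j]^-=[i-1,j+1]$. For $\kappa\lessdot\rho$ (one-cell difference): $\alpha_{\rho/\kappa}=\prod_{c\in\mathcal{R}_{\rho/\kappa}}\frac{[a_\kappa(c),\ell_\kappa(c)+1]}{[a_\rho(c),\ell_\rho(c)+1]}\prod_{c\in\mathcal{C}_{\rho/\kappa}}\frac{[a_\kappa(c)+1,\ell_\kappa(c)]}{[a_\rho(c)+1,\ell_\rho(c)]}$, $\overline{\alpha}_{\rho/\kappa}=\prod_{c\in\mathcal{R}_{\rho/\kappa}}\frac{[a_\kappa(c)+1,\ell_\kappa(c)]}{[a_\rho(c)+1,\ell_\rho(c)]}\prod_{c\in\mathcal{C}_{\rho/\kappa}}\frac{[a_\kappa(c),\ell_\kappa(c)+1]}{[a_\rho(c),\ell_\rho(c)+1]}$,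 $\beta=1/\alpha$, $\overline{\beta}=1/\overline{\alpha}$. For $\mu\lessdot\lambda\lessdot\nu$, with $A=n'(\lambda/\mu)-n'(\nu/\lambda)$, $B=n(\nu/\lambda)-n(\lambda/\mu)$: $\gamma_{\nu/\lambda/\mu}=\frac{(1-q^At^B)(1-q^{A+1}t^{B-1})}{(1-q)(1-t)}$. Probabilities: $\mathcal{P}_\lambda(\lambda\rightarrow\nu)=t^{n(\nu/\lambda)}\alpha_{\nu/\lambda}$, $\overline{\mathcal{P}}_\lambda(\lambda\leftarrow\nu)=t^{n(\nu/\lambda)}\overline{\alpha}_{\nu/\lambda}$, for $\mu\lessdot\lambda$: $\mathcal{P}_\lambda(\mu\rightarrow\nu)=t^{B-1}\alpha_{\nu/\lambda}\beta_{\lambda/\mu}/\gamma_{\nu/\lambda/\mu}$, $\overline{\mathcal{P}}_\lambda(\mu\leftarrow\nu)=t^{B-1}\overline{\alpha}_{\nu/\lambda}\overline{\beta}_{\lambda/\mu}/\gamma_{\nu/\lambda/\mu}$. Parameters: if $\lambda$ has distinct part sizes $u_1>\dots>u_d>0$, $v_i$ is the multiplicity of $u_i$ and $h_i=u_i-u_{i+1}$ ($u_{d+1}=0$); $h_{i,j}=h_i+\dots+h_j$, $v_{i,j}=v_i+\dots+v_j$ for $i\le j$, and $0$ for $i>j$. For $0\le s\le d$, $\lambda^{(+s)}$ adds a cell in row $v_{1,s}+1$; $\lambda^{(-0)}=\lambda$, and for $1\le r\le d$, $\lambda^{(-r)}$ removes a cell from row $v_{1,r}$. $\alpha_s=\alpha_{\lambda^{(+s)}/\lambda}$,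 $\overline{\alpha}_s=\overline{\alpha}_{\lambda^{(+s)}/\lambda}$, $\beta_r=\beta_{\lambda/\lambda^{(-r)}}$, $\overline{\beta}_r=\overline{\beta}_{\lambda/\lambda^{(-r)}}$, $p_{r,s}=\mathcal{P}_\lambda(\lambda^{(-r)}\rightarrow\lambda^{(+s)})$, $\overline{p}_{r,s}=\overline{\mathcal{P}}_\lambda(\lambda^{(-r)}\leftarrow\lambda^{(+s)})$, and $\gamma'_{r,s}=\frac{[h_{r,s},v_{r+1,s}][h_{r,s},v_{r+1,s}]^-}{[0,1][1,0]}$ if $0<r\le s$, $\gamma'_{r,s}=\frac{[h_{s+1,r-1},v_{s+1,r}][h_{s+1,r-1},v_{s+1,r}]^+}{[0,1][1,0]}$ if $r>s$. *)

(* Defs.v *)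
From mathcomp Require Import all_boot all_order all_algebra.
Set Implicit Arguments.
Unset Strict Implicit.
Unset Printing Implicit Defensive.
Import Order.TTheory GRing.Theory Num.Theory.

(* French convention: cell (x,y) with x = column, y = row, 1 <= x <= la_y.
   Lists may carry trailing zero parts (e.g. after removing the last cell of a
   row of length 1); zero parts contribute no cells. *)

Definition is_partition (la : seq nat) : bool :=
  sorted geq la && all (fun x => 0 < x)%N la.

(* la_y, 1-indexed, 0 beyond the length *)
Definition part (la : seq nat) (y : nat) : nat := nth 0%N la y.-1.

(* la'_x : number of rows of length >= x (used for x >= 1) *)
Definition conj_part (la : seq nat) (x : nat) : nat := count (fun p => x <= p)%N la.

Definition in_part (la : seq nat) (c : nat * nat) : bool :=
  [&& 0 < c.1, 0 < c.2 & c.1 <= part la c.2]%N.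

Definition cells (la : seq nat) : seq (nat * nat) :=
  [seq (x, y) | y <- iota 1 (size la), x <- iota 1 (part la y)].

Definition arm (la : seq nat) (c : nat * nat) : nat := (part la c.2 - c.1)%N.
Definition leg (la : seq nat) (c : nat * nat) : nat := (conj_part la c.1 - c.2)%N.

Definition nfun (la : seq nat) : nat := (\sum_(c <- cells la) leg la c)%N.
Definition nfun' (la : seq nat) : nat := (\sum_(c <- cells la) arm la c)%N.

Definition nskew (rho ka : seq nat) : int := (nfun rho)%:Z - (nfun ka)%:Z.
Definition nskew' (rho ka : seq nat) : int := (nfun' rho)%:Z - (nfun' ka)%:Z.

Definition skew_cells (rho ka : seq nat) : seq (nat * nat) :=
  [seq c <- cells rho | ~~ in_part ka c].

Definition Rcells (rho ka : seq nat) : seq (nat * nat) :=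
  [seq c <- cells ka | has (fun e => e.2 == c.2) (skew_cells rho ka)].
Definition Ccells (rho ka : seq nat) : seq (nat * nat) :=
  [seq c <- cells ka | has (fun e => e.1 == c.1) (skew_cells rho ka)].

Definition dnum (la : seq nat) : nat := size (undup la).
Definition upart (la : seq nat) (i : nat) : nat := nth 0%N (undup la) i.-1.
Definition vmult (la : seq nat) (i : nat) : nat := count_mem (upart la i) la.
Definition hgap (la : seq nat) (i : nat) : nat := (upart la i - upart la i.+1)%N.
Definition hsum (la : seq nat) (i j : nat) : nat := (\sum_(i <= k < j.+1) hgap la k)%N.
Definition vsum (la : seq nat) (i j : nat) : nat := (\sum_(i <= k < j.+1) vmult la k)%N.

(* la^(+s): add a cell in row v_{1,s}+1 *)
Definition addcell (la : seq nat) (s : nat) : seq nat := incr_nth la (vsum la 1 s).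
(* la^(-r): remove a cell from row v_{1,r} (la^(-0) = la) *)
Definition remcell (la : seq nat) (r : nat) : seq nat :=
  if r == 0%N then la
  else set_nth 0%N la (vsum la 1 r).-1 (nth 0%N la (vsum la 1 r).-1).-1.

Local Open Scope ring_scope.

Section QT.
Variables (R : fieldType) (q t : R).

Definition brk (i j : int) : R := 1 - q ^ i * t ^ j.

Definition alpha (rho ka : seq nat) : R :=
  (\prod_(c <- Rcells rho ka)
     (brk (arm ka c) (leg ka c).+1 / brk (arm rho c) (leg rho c).+1)) *
  (\prod_(c <- Ccells rho ka)
     (brk (arm ka c).+1 (leg ka c) / brk (arm rho c).+1 (leg rho c))).

Definition alphabar (rho ka : seq nat) : R :=
  (\prod_(c <- Rcells rho ka)
     (brk (arm ka c).+1 (leg ka c) / brk (arm rho c).+1 (leg rho c))) *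
  (\prod_(c <- Ccells rho ka)
     (brk (arm ka c) (leg ka c).+1 / brk (arm rho c) (leg rho c).+1)).

Definition beta (rho ka : seq nat) : R := (alpha rho ka)^-1.
Definition betabar (rho ka : seq nat) : R := (alphabar rho ka)^-1.

Definition Aexp (nu la mu : seq nat) : int := nskew' la mu - nskew' nu la.
Definition Bexp (nu la mu : seq nat) : int := nskew nu la - nskew la mu.

Definition gamma (nu la mu : seq nat) : R :=
  (1 - q ^ Aexp nu la mu * t ^ Bexp nu la mu) *
  (1 - q ^ (Aexp nu la mu + 1) * t ^ (Bexp nu la mu - 1)) / ((1 - q) * (1 - t)).

Definition Pstep (la nu : seq nat) : R := t ^ nskew nu la * alpha nu la.
Definition Pbarstep (la nu : seq nat) : R := t ^ nskew nu la * alphabar nu la.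

(* P_la(mu -> nu), Pbar_la(mu <- nu) for mu <. la <. nu *)
Definition Ptrans (la mu nu : seq nat) : R :=
  t ^ (Bexp nu la mu - 1) * alpha nu la * beta la mu / gamma nu la mu.
Definition Pbartrans (la mu nu : seq nat) : R :=
  t ^ (Bexp nu la mu - 1) * alphabar nu la * betabar la mu / gamma nu la mu.

Definition prs (la : seq nat) (r s : nat) : R :=
  if r == 0%N then Pstep la (addcell la s)
  else Ptrans la (remcell la r) (addcell la s).
Definition pbarrs (la : seq nat) (r s : nat) : R :=
  if r == 0%N then Pbarstep la (addcell la s)
  else Pbartrans la (remcell la r) (addcell la s).

Definition alpha_s (la : seq nat) (s : nat) : R := alpha (addcell la s) la.
Definition alphabar_s (la : seq nat) (s : nat) : R := alphabar (addcell la s) la.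
Definition beta_r (la : seq nat) (r : nat) : R := beta la (remcell la r).
Definition betabar_r (la : seq nat) (r : nat) : R := betabar la (remcell la r).

(* gamma'_{r,s}, for r >= 1 *)
Definition gammap (la : seq nat) (r s : nat) : R :=
  if (r <= s)%N then
    brk (hsum la r s) (vsum la r.+1 s) *
    brk ((hsum la r s)%:Z - 1) ((vsum la r.+1 s)%:Z + 1) / (brk 0 1 * brk 1 0)
  else
    brk (hsum la s.+1 r.-1) (vsum la s.+1 r) *
    brk ((hsum la s.+1 r.-1)%:Z + 1) ((vsum la s.+1 r)%:Z - 1) / (brk 0 1 * brk 1 0).

(* tau^col_{r,s}, for r >= 1 *)
Definition tau_col (la : seq nat) (r s : nat) : R :=
  if (r <= s)%N then q ^ (-1 + (hsum la r s)%:Z) * t ^ (1 + 2 * (vsum la r.+1 s)%:Z)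
  else q ^ (hsum la s.+1 r.-1)%:Z.

End QT.

Definition pcol (R : fieldType) (q t : R) (la : seq nat) (r s : nat) : R :=
  prs q^-1 t^-1 la r s.
Definition pbarcol (R : fieldType) (q t : R) (la : seq nat) (r s : nat) : R :=
  pbarrs q^-1 t^-1 la r s.

(* Main.v *)
Require Import Defs.
From mathcomp Require Import all_boot all_order all_algebra.
From mathcomp Require Import zify ring.
Import Order.TTheory GRing.Theory Num.Theory.

Lemma part_gt0_size la b : (0 < part la b)%N -> (0 < b)%N -> (b <= size la)%N.
Proof.
rewrite /part => h hb; case: (ltnP b.-1 (size la)) => [|hs]; first lia.
by rewrite nth_default in h.
Qed.

Lemma mem_cells la c : (c \in cells la) = in_part la c.
Proof.
case: c => a b; rewrite /in_part /=.
apply/allpairsPdep/idP.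
- move=> [y [x [hy hx [-> ->]]]]; move: hy hx; rewrite !mem_iota => hy hx.
  apply/and3P; split; lia.
- move=> /and3P [ha hb hab]; exists b, a; split => //; rewrite mem_iota.
  + have := part_gt0_size _ _ (leq_trans ha hab) hb; lia.
  + lia.
Qed.

Lemma uniq_cells la : uniq (cells la).
Proof.
apply: allpairs_uniq_dep; first exact: iota_uniq.
  by move=> y _; exact: iota_uniq.
by move=> [y1 x1] [y2 x2] _ _ /= [-> ->].
Qed.

Lemma count_cells_row la y : (0 < y)%N ->
  count (fun c : nat * nat => c.2 == y) (cells la) = part la y.
Proof.
move=> hy; rewrite /cells count_flatten -map_comp.
rewrite (eq_map (g := fun y' => ((y' == y) * part la y)%N)); last first.
  move=> y' /=; rewrite count_map.
  case: eqP => [->|ne] /=.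
    rewrite mul1n (eq_count (a2 := predT)) ?count_predT ?size_iota //.
    by move=> z /=; rewrite eqxx.
  rewrite mul0n (eq_count (a2 := pred0)) ?count_pred0 // => z /=; exact/eqP.
rewrite sumnE big_map -big_distrl /=.
rewrite (_ : \sum_(y' <- iota 1 (size la)) (y' == y : nat) = count (pred1 y) (iota 1 (size la)))%N; last first.
  rewrite -sum1_count [RHS]big_mkcond; apply: eq_bigr => i _ /=; by case: (i == y).

rewrite (count_uniq_mem _ (iota_uniq 1 (size la))) mem_iota.
case: (ltnP y (1 + size la)) => h; first by rewrite hy mul1n.
rewrite andbF mul0n /part nth_default //; lia.
Qed.

Lemma count_cells_col la x : (0 < x)%N ->
  count (fun c : nat * nat => c.1 == x) (cells la) = conj_part la x.
Proof.
move=> hx; rewrite /cells count_flatten -map_comp.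
rewrite (eq_map (g := fun y' => nat_of_bool (x <= part la y')%N)); last first.
  move=> y' /=; rewrite count_map /=.
  rewrite (eq_count (a2 := pred1 x)) // count_uniq_mem ?iota_uniq // mem_iota.
  by rewrite hx /=; congr nat_of_bool; lia.
rewrite /conj_part -(sumn_count (fun p => x <= p)%N) /part.
congr sumn.
have -> : iota 1 (size la) = map succn (iota 0 (size la)).
  by rewrite -(iotaDl 1) add1n.
rewrite -map_comp.
transitivity [seq nat_of_bool (x <= i)%N | i <- map (nth 0 la) (iota 0 (size la))]; last by rewrite map_nth_iota0 // take_size.
rewrite -map_comp.
by apply: eq_map.
Qed.

Lemma conj_incr ka i x : (0 < x)%N ->
  conj_part (incr_nth ka i) x = (conj_part ka x + (x == (nth 0 ka i).+1))%N.
Proof.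
rewrite /conj_part => hx; elim: ka i => [|a ka IH] [|i] /=.
- by rewrite addn0; case: x hx => [|[|x]].
- elim: i => [|i IHi] /=; first by case: x hx => [|[|x]].
  by move: IHi; rewrite leqNgt hx /=.

- rewrite (leq_eqVlt x a.+1) ltnS; case: eqP => [->|_] /=; rewrite ?ltnn; lia.
- rewrite IH; lia.
Qed.

Definition OC (ka : seq nat) (i : nat) :=
  [/\ (i <= size ka)%N,
      forall j, (j < i)%N -> ((nth 0 ka i).+1 <= nth 0 ka j)%N &
      forall j, (i <= j)%N -> (nth 0 ka j <= nth 0 ka i)%N].

Lemma part_incr ka i b : (0 < b)%N ->
  part (incr_nth ka i) b = (part ka b + (b == i.+1))%N.
Proof. rewrite /part nth_incr_nth => hb; case: b hb => // b _ /=; rewrite eqSS eq_sym; lia. Qed.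

Lemma conj_OC ka i : OC ka i -> conj_part ka (nth 0 ka i).+1 = i.
Proof.
case=> Hi H1 H2; rewrite /conj_part; set x := (nth 0 ka i).+1; rewrite -(cat_take_drop i ka) count_cat.
rewrite (_ : count _ (take i ka) = size (take i ka)); last first.
  apply/eqP; rewrite -all_count; apply/(all_nthP 0) => j; rewrite size_take_min => hj.
  by rewrite nth_take ?H1 //; lia.
rewrite (_ : count _ (drop i ka) = 0%N); last first.
  apply/eqP; rewrite -leqn0 leqNgt -has_count; apply/(has_nthP 0) => -[j]; rewrite size_drop => hj.
  rewrite nth_drop /x; have := H2 (i + j)%N (leq_addr _ _); lia.
rewrite size_take_min; lia.
Qed.

Lemma in_part_incr ka i c : OC ka i ->
  in_part (incr_nth ka i) c = in_part ka c || (c == ((nth 0 ka i).+1, i.+1)).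
Proof.
case=> Hi H1 H2; case: c => a b; rewrite /in_part /=.
case hb: (0 < b)%N; last by rewrite !andbF /= ; case: eqP => // -[_ e]; move: hb; rewrite e.
rewrite part_incr // /part xpair_eqE.
case: (eqVneq b i.+1) => [->|nb] /=; last by rewrite addn0 andbF orbF.
rewrite addn1 /=; case: (ltngtP a (nth 0 ka i).+1) => h; rewrite ?andbT ?andbF /=; lia.
Qed.

Lemma perm_cells_incr ka i : OC ka i ->
  perm_eq (cells (incr_nth ka i)) (((nth 0 ka i).+1, i.+1) :: cells ka).
Proof.
move=> hOC; apply: uniq_perm; first exact: uniq_cells.
  rewrite /= uniq_cells andbT mem_cells /in_part /part /=; lia.
move=> c; rewrite in_cons mem_cells in_part_incr // mem_cells orbC.
by [].
Qed.

Lemma has_skew_row ka i (c : nat * nat) : OC ka i ->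
  has (fun e : nat * nat => e.2 == c.2) (skew_cells (incr_nth ka i) ka) = (c.2 == i.+1 :> nat).
Proof.
move=> hOC; apply/hasP/idP.
- move=> [e]; rewrite mem_filter mem_cells in_part_incr //.
  by case: (in_part ka e) => //= /eqP -> /eqP <-.
- move=> /eqP hc; exists ((nth 0 ka i).+1, i.+1); last by rewrite hc.
  rewrite mem_filter mem_cells in_part_incr // eqxx orbT andbT /in_part /part /=; lia.
Qed.

Lemma has_skew_col ka i (c : nat * nat) : OC ka i ->
  has (fun e : nat * nat => e.1 == c.1) (skew_cells (incr_nth ka i) ka) = (c.1 == (nth 0 ka i).+1 :> nat).
Proof.
move=> hOC; apply/hasP/idP.
- move=> [e]; rewrite mem_filter mem_cells in_part_incr //.
  by case: (in_part ka e) => //= /eqP -> /eqP <-.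
- move=> /eqP hc; exists ((nth 0 ka i).+1, i.+1); last by rewrite hc.
  rewrite mem_filter mem_cells in_part_incr // eqxx orbT andbT /in_part /part /=; lia.
Qed.

Lemma Rcells_incr ka i : OC ka i ->
  Rcells (incr_nth ka i) ka = [seq c <- cells ka | c.2 == i.+1].
Proof. by move=> hOC; apply: eq_filter => c; rewrite has_skew_row. Qed.

Lemma Ccells_incr ka i : OC ka i ->
  Ccells (incr_nth ka i) ka = [seq c <- cells ka | c.1 == (nth 0 ka i).+1].
Proof. by move=> hOC; apply: eq_filter => c; rewrite has_skew_col. Qed.

Lemma arm_incr ka i c : in_part ka c ->
  arm (incr_nth ka i) c = (arm ka c + (c.2 == i.+1))%N.
Proof.
case: c => a b; rewrite /in_part /arm /= => /and3P [ha hb hab].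
rewrite part_incr //; lia.
Qed.

Lemma leg_incr ka i c : OC ka i -> in_part ka c ->
  leg (incr_nth ka i) c = (leg ka c + (c.1 == (nth 0 ka i).+1))%N.
Proof.
move=> hOC; case: c => a b; rewrite /in_part /leg /= => /and3P [ha hb hab].
rewrite conj_incr //.
case: (eqVneq a (nth 0 ka i).+1) => [ea|ne]; last by rewrite /= !addn0.
have hbi : (b <= i)%N.
  case: hOC => _ _ H2; rewrite leqNgt; apply/negP => hbi.
  have := H2 b.-1 ltac:(lia); move: hab; rewrite /part ea; lia.
rewrite ea conj_OC //; lia.
Qed.

Lemma nfun_incr ka i : OC ka i -> nfun (incr_nth ka i) = (nfun ka + i)%N.
Proof.
move=> hOC; rewrite /nfun (perm_big _ (perm_cells_incr _ _ hOC)) big_cons.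
have -> : leg (incr_nth ka i) ((nth 0 ka i).+1, i.+1) = 0%N by rewrite /leg /= conj_incr // eqxx conj_OC //; lia.
rewrite /= add0n.
rewrite (eq_big_seq (fun c => leg ka c + (c.1 == (nth 0 ka i).+1))%N); last first.
  by move=> c; rewrite mem_cells => hc; rewrite leg_incr.
rewrite big_split /=; congr (_ + _)%N.
transitivity (conj_part ka (nth 0 ka i).+1); last exact: conj_OC.
rewrite -(count_cells_col ka _ (ltn0Sn _)) -sum1_count [RHS]big_mkcond /=.
by apply: eq_bigr => c _; case: eqP.
Qed.

Lemma nfun'_incr ka i : OC ka i -> nfun' (incr_nth ka i) = (nfun' ka + nth 0 ka i)%N.
Proof.
move=> hOC; rewrite /nfun' (perm_big _ (perm_cells_incr _ _ hOC)) big_cons.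
have -> : arm (incr_nth ka i) ((nth 0 ka i).+1, i.+1) = 0%N.
  by rewrite /arm /= part_incr // eqxx /part /=; lia.
rewrite /= add0n.
rewrite (eq_big_seq (fun c => arm ka c + (c.2 == i.+1))%N); last first.
  by move=> c; rewrite mem_cells => hc; rewrite arm_incr.
rewrite big_split /=; congr (_ + _)%N.
rewrite -[nth 0 ka i]/(part ka i.+1) -(count_cells_row ka _ (ltn0Sn _)) -sum1_count [RHS]big_mkcond /=.
by apply: eq_bigr => c _; case: eqP.
Qed.

Lemma geq_transitive : transitive geq.
Proof. move=> a b c h1 h2; exact: leq_trans h2 h1. Qed.

Lemma nth_mono_sorted (s : seq nat) j k : sorted geq s -> (j <= k)%N ->
  (nth 0 s k <= nth 0 s j)%N.
Proof.
move=> hs hjk; case: (ltnP k (size s)) => hk; last by rewrite nth_default.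
have := sorted_leq_nth geq_transitive (fun x => leqnn x) 0 hs.
move=> /(_ j k); rewrite !inE => h; apply: h => //; exact: leq_ltn_trans hjk hk.
Qed.

Lemma count_add_in (T : eqType) (s : seq T) (a b c : pred T) :
  {in s, forall p, (a p : nat) = (b p + c p)%N} -> count a s = (count b s + count c s)%N.
Proof.
elim: s => [|x s IH] //= h.
rewrite IH ?h ?mem_head //; first lia.
by move=> p hp; apply: h; rewrite in_cons hp orbT.
Qed.

Lemma threshold (s : seq nat) a j : sorted geq s -> (j < size s)%N ->
  (j < count (leq a) s)%N = (a <= nth 0 s j)%N.
Proof.
elim: s j => [|h s IH] j //= hs hj.
have hall : all (geq h) s by exact: (order_path_min geq_transitive hs).
have hs' : sorted geq s by exact: path_sorted hs.
have c0 : (h < a)%N -> count (leq a) s = 0%N.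
  move=> ha; apply/eqP; rewrite -leqn0 leqNgt -has_count; apply/hasP => -[p hp hap].
  by have := allP hall p hp; rewrite /=; lia.
case: j hj => [|j] hj /=.
- case: (leqP a h) => ha /=; first by [].
  by rewrite c0.
- rewrite ltnS in hj; case: (leqP a h) => ha /=; first by rewrite add1n ltnS IH.
  rewrite c0 //; symmetry; apply/negbTE; rewrite -ltnNge.
  have := allP hall (nth 0 s j) (mem_nth 0 hj); rewrite /=; lia.
Qed.


Lemma sortedU la : is_partition la -> sorted geq (undup la).
Proof.
case/andP => hs _; exact: (subseq_sorted geq_transitive (undup_subseq la) hs).
Qed.

Lemma u_mono la j k : is_partition la -> (0 < j <= k)%N -> (upart la k <= upart la j)%N.
Proof. move=> hp hjk; rewrite /upart; apply: nth_mono_sorted; [exact: sortedU | lia]. Qed.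

Lemma u_strict la j k : is_partition la -> (0 < j < k)%N -> (k <= dnum la)%N ->
  (upart la k < upart la j)%N.
Proof.
move=> hp hjk hk; rewrite ltn_neqAle (u_mono la j k hp) ?andbT; last by lia.
rewrite /upart nth_uniq ?undup_uniq //; rewrite /dnum in hk; lia.
Qed.

Lemma u_in la k : (0 < k <= dnum la)%N -> upart la k \in la.
Proof. move=> hk; rewrite /upart -mem_undup; apply: mem_nth; rewrite /dnum in hk; lia. Qed.

Lemma u_pos la k : is_partition la -> (0 < k <= dnum la)%N -> (0 < upart la k)%N.
Proof. by case/andP => _ /allP hpos hk; apply: hpos; exact: u_in. Qed.

Lemma u_last la : upart la (dnum la).+1 = 0%N.
Proof. by rewrite /upart nth_default. Qed.

Lemma in_la la p : p \in la -> exists2 k, (0 < k <= dnum la)%N & p = upart la k.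
Proof.
move=> hp; exists (index p (undup la)).+1.
  by rewrite /dnum ltn0Sn /= index_mem mem_undup.
by rewrite /upart /= nth_index // mem_undup.
Qed.

Lemma vsum_count la k : is_partition la -> (0 < k <= dnum la)%N ->
  vsum la 1 k = count (leq (upart la k)) la.
Proof.
move=> hp; elim: k => [|k IH] // hk.
rewrite /vsum big_nat_recr /=; last by lia.
case: k IH hk => [|k] IH hk.
- rewrite big_geq // add0n /vmult; apply: eq_in_count => p hpl.
  have [j hj ->] := in_la _ _ hpl; have := u_mono la 1 j hp ltac:(lia).
  case: (eqVneq (upart la j) (upart la 1)) => [->|ne]; first by rewrite /= eqxx leqnn.
  move=> h; rewrite /= (negbTE ne); apply/esym/negbTE; rewrite -ltnNge; lia.
- rewrite -/(vsum la 1 k.+1) IH; last by lia.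
  rewrite /vmult; symmetry; apply: count_add_in => p hpl.
  have [j hj ->] := in_la _ _ hpl; rewrite /=.
  case: (ltngtP j k.+2) => hjk.
  + have h1 := u_mono la j k.+1 hp ltac:(lia).
    have h2 := u_strict la k.+1 k.+2 hp ltac:(lia) ltac:(lia).
    have -> : (upart la j == upart la k.+2) = false by apply/eqP; lia.
    have -> : (upart la k.+2 <= upart la j)%N by lia.
    by have -> : (upart la k.+1 <= upart la j)%N.
  + have h1 := u_strict la k.+2 j hp ltac:(lia) ltac:(lia).
    have h2 := u_strict la k.+1 k.+2 hp ltac:(lia) ltac:(lia).
    have -> : (upart la j == upart la k.+2) = false by apply/eqP; lia.
    have -> : (upart la k.+2 <= upart la j)%N = false by apply/negbTE; lia.
    by have -> : (upart la k.+1 <= upart la j)%N = false by apply/negbTE; lia.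
  + subst j; rewrite eqxx leqnn.
    have h2 := u_strict la k.+1 k.+2 hp ltac:(lia) ltac:(lia).
    by have -> : (upart la k.+1 <= upart la k.+2)%N = false by apply/negbTE; lia.
Qed.

Lemma vsum0 la : vsum la 1 0 = 0%N.
Proof. by rewrite /vsum big_geq. Qed.

Lemma block_add la s : is_partition la -> (s <= dnum la)%N ->
  [/\ (vsum la 1 s <= size la)%N, nth 0 la (vsum la 1 s) = upart la s.+1 &
      (0 < s)%N -> (0 < vsum la 1 s)%N /\ nth 0 la (vsum la 1 s).-1 = upart la s].
Proof.
move=> hp hs; have hsort : sorted geq la by case/andP: hp.
case: s hs => [|s] hs.
- rewrite vsum0; split => //.
  move: hs; case: la hp hsort => [|h l] hp hsort hs; first by [].
  have hd : (0 < dnum (h :: l))%N.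
    by rewrite /dnum; have := mem_undup (h :: l) h; rewrite mem_head; case: (undup _).
  have [j hj ej] := in_la (h :: l) h (mem_head _ _).
  have hu1 := u_in (h :: l) 1 ltac:(lia).
  have := nth_mono_sorted (h :: l) 0 (index (upart (h :: l) 1) (h :: l)) hsort (leq0n _).
  rewrite nth_index //= => h1.
  have := u_mono (h :: l) 1 j hp ltac:(lia); rewrite -ej; lia.
- have hm := vsum_count la s.+1 hp ltac:(lia).
  set m := vsum la 1 s.+1 in hm *.
  have hus := u_in la s.+1 ltac:(lia).
  set us := upart la s.+1 in hm hus *.
  have hmsz : (m <= size la)%N by rewrite hm count_size.
  set p := index us la.
  have hp_sz : (p < size la)%N by rewrite index_mem.
  have hnp : nth 0 la p = us by rewrite nth_index.
  have hpm : (p < m)%N by rewrite hm threshold // hnp.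
  have hm1 : nth 0 la m.-1 = us.
    have h1 : (us <= nth 0 la m.-1)%N.
      by rewrite -threshold -?hm; lia.
    have := nth_mono_sorted la p m.-1 hsort ltac:(lia); lia.
  split => //; last by move=> _; split => //; lia.
  case: (ltnP s.+1 (dnum la)) => hsd.
  + have hus1 := u_in la s.+2 ltac:(lia).
    have hlt := u_strict la s.+1 s.+2 hp ltac:(lia) hsd.
    set p' := index (upart la s.+2) la.
    have hp'_sz : (p' < size la)%N by rewrite index_mem.
    have hnp' : nth 0 la p' = upart la s.+2 by rewrite nth_index.
    have hmp' : (m <= p')%N.
      rewrite leqNgt hm threshold // hnp'; rewrite -/us; lia.
    have hmsz' : (m < size la)%N by lia.
    have hlt2 : (nth 0 la m < us)%N.
      by rewrite ltnNge -threshold -?hm ?ltnn.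
    have hge := nth_mono_sorted la m p' hsort hmp'; rewrite hnp' in hge.
    have [j hj ej] := in_la la (nth 0 la m) (mem_nth 0 hmsz').
    case: (leqP j s.+1) => hjs.
      have := u_mono la j s.+1 hp ltac:(lia); rewrite -/us; lia.
    have := u_mono la s.+2 j hp ltac:(lia); lia.
  + have hsd' : s.+1 = dnum la by lia.
    have -> : m = size la.
      rewrite hm -(count_predT la); apply: eq_in_count => x hx.
      have [j hj ->] := in_la la x hx; apply: u_mono => //; rewrite hsd'; lia.
    by rewrite nth_default // hsd' u_last.
Qed.

Lemma u_next_lt la s : is_partition la -> (0 < s <= dnum la)%N ->
  (upart la s.+1 < upart la s)%N.
Proof.
move=> hp hs; case: (ltnP s (dnum la)) => h.
  by apply: u_strict => //; lia.
have -> : s = dnum la by lia.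
by rewrite u_last; apply: u_pos => //; lia.
Qed.

Lemma OC_add la s : is_partition la -> (s <= dnum la)%N -> OC la (vsum la 1 s).
Proof.
move=> hp hs; have hsort : sorted geq la by case/andP: hp.
have [h1 h2 h3] := block_add la s hp hs.
split => // j hj; last by rewrite nth_mono_sorted.
case: s hs h1 h2 h3 hj => [|s] hs h1 h2 h3 hj; first by rewrite vsum0 in hj.
have [h4 h5] := h3 (ltn0Sn _).
have := nth_mono_sorted la j (vsum la 1 s.+1).-1 hsort ltac:(lia).
have := u_next_lt la s.+1 hp ltac:(lia).
rewrite h2 h5; lia.
Qed.

Lemma incr_set_nth (s : seq nat) i : (i < size s)%N -> (0 < nth 0 s i)%N ->
  incr_nth (set_nth 0 s i (nth 0 s i).-1) i = s.
Proof.
move=> hi hpos; apply: (@eq_from_nth _ 0).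
  rewrite size_incr_nth size_set_nth; have -> : maxn i.+1 (size s) = size s by lia.
  by rewrite hi.
move=> j _; rewrite nth_incr_nth nth_set_nth /=.
case: (eqVneq j i) => [->|ne] /=; lia.
Qed.

Lemma remcell_facts la r : is_partition la -> (0 < r <= dnum la)%N ->
  let i := (vsum la 1 r).-1 in
  [/\ incr_nth (remcell la r) i = la, OC (remcell la r) i,
      nth 0 (remcell la r) i = (upart la r).-1 & vsum la 1 r = i.+1].
Proof.
move=> hp hr i; have hsort : sorted geq la by case/andP: hp.
have [h1 h2 h3] := block_add la r hp ltac:(lia).
have [h4 h5] := h3 ltac:(lia).
have hupos := u_pos la r hp hr.
have hlt := u_next_lt la r hp hr.
have hi : (i < size la)%N by rewrite /i; lia.
have hrem : remcell la r = set_nth 0 la i (nth 0 la i).-1.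
  by rewrite /remcell ifN // -lt0n; case/andP: hr.
rewrite hrem.
have hnth : nth 0 (set_nth 0 la i (nth 0 la i).-1) i = (upart la r).-1.
  by rewrite nth_set_nth /= eqxx h5.
split => //.
- by apply: incr_set_nth => //; rewrite h5.
- split.
  + rewrite size_set_nth; lia.
  + move=> j hj; rewrite hnth nth_set_nth /=.
    have -> : (j == i) = false by apply/negbTE; rewrite neq_ltn hj.
    have := nth_mono_sorted la j i hsort (ltnW hj); rewrite /i h5; lia.
  + move=> j hj; rewrite hnth nth_set_nth /=.
    case: ifP => [_|/negbT ne]; first by rewrite h5.
    have hij : (i < j)%N by rewrite ltn_neqAle eq_sym ne hj.
    have := nth_mono_sorted la i.+1 j hsort ltac:(lia).
    have -> : i.+1 = vsum la 1 r by rewrite /i; lia.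
    rewrite h2; lia.
- by rewrite /i; lia.
Qed.

Lemma hsum_tel la a b : is_partition la -> (0 < a <= b.+1)%N ->
  hsum la a b = (upart la a - upart la b.+1)%N.
Proof.
move=> hp; elim: b => [|b IH] hab.
  have -> : a = 1%N by lia.
  by rewrite /hsum big_geq // subnn.
case: (eqVneq a b.+2) => [->|ne]; first by rewrite /hsum big_geq // subnn.
rewrite /hsum big_nat_recr /=; last by lia.
rewrite -/(hsum la a b) IH; last by lia.
rewrite /hgap.
have := u_mono la a b.+1 hp ltac:(lia); have := u_mono la b.+1 b.+2 hp ltac:(lia); lia.
Qed.

Lemma vsum_split la r s : (r <= s)%N -> vsum la 1 s = (vsum la 1 r + vsum la r.+1 s)%N.
Proof. by move=> h; rewrite /vsum -big_cat_nat //; lia. Qed.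

Local Open Scope ring_scope.

Lemma brk_inv (R : fieldType) (q t : R) (i j : int) : q != 0 -> t != 0 ->
  brk q^-1 t^-1 i j = - ((q ^ i)^-1 * (t ^ j)^-1) * brk q t i j.
Proof.
move=> hq ht; rewrite /brk !exprz_inv -!invr_expz.
have hqi := expfz_neq0 i hq; have htj := expfz_neq0 j ht.
move: (q ^ i) (t ^ j) hqi htj => Q T hQ hT; field; by rewrite hQ hT ?oppr_eq0 ?oner_eq0.
Qed.

Lemma brk_ratio (R : fieldType) (q t : R) (a b c d : int) : q != 0 -> t != 0 ->
  brk q^-1 t^-1 a b / brk q^-1 t^-1 c d =
  q ^ (c - a) * t ^ (d - b) * (brk q t a b / brk q t c d).
Proof.
move=> hq ht; rewrite !brk_inv // !exprzDr ?unitfE // -!invr_expz.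
have := expfz_neq0 a hq; have := expfz_neq0 c hq.
have := expfz_neq0 b ht; have := expfz_neq0 d ht.
move: (q ^ a) (q ^ c) (t ^ b) (t ^ d) (brk q t a b) (brk q t c d) => A C B D X Y hD hB hC hA.
case: (eqVneq Y 0) => [->|hY]; first by rewrite !(mulr0, invr0).
field; by rewrite hA hB hC hD hY oppr_eq0 oner_eq0.
Qed.

Lemma prod_scale (R : fieldType) (k : R) (s : seq (nat * nat)) (F : nat * nat -> R) :
  \prod_(c <- s) (k * F c) = k ^+ size s * \prod_(c <- s) F c.
Proof.
elim: s => [|x s IH]; first by rewrite !big_nil expr0 mul1r.
rewrite !big_cons IH /= exprS; move: (k ^+ size s) => K; ring.
Qed.

Lemma ratio_q (R : fieldType) (q t : R) (a : nat) (b : int) : q != 0 -> t != 0 ->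
  brk q^-1 t^-1 a b / brk q^-1 t^-1 a.+1 b = q * (brk q t a b / brk q t a.+1 b).
Proof.
move=> hq ht; rewrite brk_ratio //.
have -> : (a.+1%:Z - a%:Z = 1)%R by lia.
by rewrite subrr expr1z expr0z mulr1.
Qed.

Lemma ratio_t (R : fieldType) (q t : R) (a : int) (b : nat) : q != 0 -> t != 0 ->
  brk q^-1 t^-1 a b / brk q^-1 t^-1 a b.+1 = t * (brk q t a b / brk q t a b.+1).
Proof.
move=> hq ht; rewrite brk_ratio //.
have -> : (b.+1%:Z - b%:Z = 1)%R by lia.
by rewrite subrr expr1z expr0z mul1r.
Qed.

Lemma R_facts ka i c : OC ka i -> c \in [seq c <- cells ka | c.2 == i.+1] ->
  arm (incr_nth ka i) c = (arm ka c).+1 /\ leg (incr_nth ka i) c = leg ka c.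
Proof.
move=> hOC; rewrite mem_filter mem_cells => /andP [/eqP hc2 hc].
rewrite arm_incr // leg_incr // hc2 eqxx.
have -> : (c.1 == (nth 0%N ka i).+1) = false.
  move: hc; rewrite /in_part hc2 /part /= => /andP [_ h]; apply/eqP; lia.
by rewrite addn0 addn1.
Qed.

Lemma C_facts ka i c : OC ka i -> c \in [seq c <- cells ka | c.1 == (nth 0%N ka i).+1] ->
  arm (incr_nth ka i) c = arm ka c /\ leg (incr_nth ka i) c = (leg ka c).+1.
Proof.
move=> hOC; rewrite mem_filter mem_cells => /andP [hc1 hc].
rewrite arm_incr // leg_incr // hc1.
have -> : (c.2 == i.+1) = false.
  move: hc hc1; rewrite /in_part /part; case: c => a b /= /and3P [ha hb hab] /eqP ea.
  apply/negP => /eqP eb; move: hab; rewrite eb ea /=; lia.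
by rewrite addn0 addn1.
Qed.

Lemma alpha_incr (R : fieldType) (q t : R) ka i : q != 0 -> t != 0 -> OC ka i ->
  alpha q^-1 t^-1 (incr_nth ka i) ka = q ^+ (nth 0%N ka i) * t ^+ i * alpha q t (incr_nth ka i) ka.
Proof.
move=> hq ht hOC; rewrite /alpha (Rcells_incr _ _ hOC) (Ccells_incr _ _ hOC).
rewrite (eq_big_seq (fun c => q * (brk q t (arm ka c) (leg ka c).+1 /
   brk q t (arm (incr_nth ka i) c) (leg (incr_nth ka i) c).+1))); last first.
  move=> c hc; have [-> ->] := R_facts _ _ _ hOC hc; exact: ratio_q.
rewrite [X in _ * X](eq_big_seq (fun c => t * (brk q t (arm ka c).+1 (leg ka c) /
   brk q t (arm (incr_nth ka i) c).+1 (leg (incr_nth ka i) c)))); last first.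
  move=> c hc; have [-> ->] := C_facts _ _ _ hOC hc; exact: ratio_t.
rewrite !prod_scale !size_filter count_cells_row // count_cells_col // conj_OC //.
rewrite /part /=; move: (q ^+ _) (t ^+ _) => Q T; ring.
Qed.

Lemma alphabar_incr (R : fieldType) (q t : R) ka i : q != 0 -> t != 0 -> OC ka i ->
  alphabar q^-1 t^-1 (incr_nth ka i) ka = q ^+ (nth 0%N ka i) * t ^+ i * alphabar q t (incr_nth ka i) ka.
Proof.
move=> hq ht hOC; rewrite /alphabar (Rcells_incr _ _ hOC) (Ccells_incr _ _ hOC).
rewrite (eq_big_seq (fun c => q * (brk q t (arm ka c).+1 (leg ka c) /
   brk q t (arm (incr_nth ka i) c).+1 (leg (incr_nth ka i) c)))); last first.
  move=> c hc; have [-> ->] := R_facts _ _ _ hOC hc; exact: ratio_q.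
rewrite [X in _ * X](eq_big_seq (fun c => t * (brk q t (arm ka c) (leg ka c).+1 /
   brk q t (arm (incr_nth ka i) c) (leg (incr_nth ka i) c).+1))); last first.
  move=> c hc; have [-> ->] := C_facts _ _ _ hOC hc; exact: ratio_t.
rewrite !prod_scale !size_filter count_cells_row // count_cells_col // conj_OC //.
rewrite /part /=; move: (q ^+ _) (t ^+ _) => Q T; ring.
Qed.


Definition G (R : fieldType) (q t : R) (A B : int) : R :=
  (1 - q ^ A * t ^ B) * (1 - q ^ (A + 1) * t ^ (B - 1)) / ((1 - q) * (1 - t)).
Arguments G {R}.

Lemma G_brk (R : fieldType) (q t : R) A B :
  G q t A B = brk q t A B * brk q t (A + 1) (B - 1) / (brk q t 1 0 * brk q t 0 1).
Proof. by rewrite /G /brk !expr1z !expr0z mulr1 mul1r. Qed.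

Lemma G_inv (R : fieldType) (q t : R) A B : q != 0 -> t != 0 ->
  brk q t 1 0 != 0 -> brk q t 0 1 != 0 ->
  G q^-1 t^-1 A B = ((q ^ A * t ^ B) * (q ^ (A + 1) * t ^ (B - 1)))^-1 * (q * t) * G q t A B.
Proof.
move=> hq ht h10 h01; rewrite !G_brk !brk_inv // !expr1z !expr0z.
have := expfz_neq0 A hq; have := expfz_neq0 (A + 1) hq.
have := expfz_neq0 B ht; have := expfz_neq0 (B - 1) ht.
move: (q ^ A) (q ^ (A + 1)) (t ^ B) (t ^ (B - 1)) (brk q t A B) (brk q t (A + 1) (B - 1))
  (brk q t 1 0) (brk q t 0 1) h10 h01 => QA QA1 TB TB1 b1 b2 b3 b4 h3 h4 hTB1 hTB hQA1 hQA.
field.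
by rewrite hq ht h3 h4 hTB1 hTB hQA1 hQA oppr_eq0 oner_eq0.
Qed.

Lemma brk_neg (R : fieldType) (q t : R) (i j : int) : q != 0 -> t != 0 ->
  brk q t (- i) (- j) = - ((q ^ i)^-1 * (t ^ j)^-1) * brk q t i j.
Proof.
move=> hq ht; rewrite /brk -!invr_expz.
have := expfz_neq0 i hq; have := expfz_neq0 j ht.
move: (q ^ i) (t ^ j) => Q T hT hQ; field; by rewrite hQ hT.
Qed.

Lemma core (R : fieldType) (q t a b : R) (X1 X2 i1 i2 : nat) (A B : int) :
  q != 0 -> t != 0 -> brk q t 1 0 != 0 -> brk q t 0 1 != 0 ->
  X2%:Z = X1%:Z + A -> i1%:Z = i2%:Z + B ->
  (t^-1) ^ (B - 1) * (q ^+ X1 * t ^+ i1 * a) * (q ^+ X2 * t ^+ i2 * b)^-1 / G q^-1 t^-1 A B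
  = q ^ A * t ^ B * t ^ B * t^-1 * (a * b^-1) / G q t A B.
Proof.
move=> hq ht h10 h01 hX hi.
have hqu : q \is a GRing.unit by rewrite unitfE.
have htu : t \is a GRing.unit by rewrite unitfE.
rewrite G_inv // exprz_inv -invr_expz !exprnP hX hi !(exprzDr hqu) !(exprzDr htu) expr1z exprN1.
have := expfz_neq0 X1 hq; have := expfz_neq0 A hq.
have := expfz_neq0 i2 ht; have := expfz_neq0 B ht.
move: (q ^ X1) (q ^ A) (t ^ i2) (t ^ B) (G q t A B) => QX QA T2 TB Gv hTB hT2 hQA hQX.
case: (eqVneq Gv 0) => [->|hG]; first by rewrite !(mulr0, invr0).
case: (eqVneq b 0) => [->|hb]; first by rewrite !(mulr0, invr0, mul0r).
field.
by rewrite hq ht hG hb hTB hT2 hQA hQX.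
Qed.


Lemma brk_ne0 (R : fieldType) (q t : R) :
  (forall i j : int, (i != 0) || (j != 0) -> q ^ i * t ^ j != 1) ->
  brk q t 1 0 != 0 /\ brk q t 0 1 != 0.
Proof.
move=> H; rewrite /brk !subr_eq0 ![1 == _]eq_sym; split; exact: H.
Qed.

Theorem lemma5p1 (R : fieldType) (q t : R) (la : seq nat) (r s : nat) :
  q != 0 -> t != 0 ->
  (forall i j : int, (i != 0) || (j != 0) -> q ^ i * t ^ j != 1) ->
  is_partition la -> (s <= dnum la)%N -> (r <= dnum la)%N ->
  pcol q t la r s =
    (if r == 0%N then q ^+ hsum la s.+1 (dnum la) * alpha_s q t la s
     else tau_col q t la r s * (alpha_s q t la s * beta_r q t la r) / gammap q t la r s)
  /\
  pbarcol q t la r s =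
    (if r == 0%N then q ^+ hsum la s.+1 (dnum la) * alphabar_s q t la s
     else tau_col q t la r s * (alphabar_s q t la s * betabar_r q t la r) / gammap q t la r s).
Proof.
move=> hq ht H3 hp hs hr.
have [h10 h01] := brk_ne0 _ _ _ H3.
set i1 := vsum la 1 s.
have hOC1 := OC_add la s hp hs.
have [hsz1 hnth1 _] := block_add la s hp hs.
have Ha1 := alpha_incr _ q t la i1 hq ht hOC1.
have Hb1 := alphabar_incr _ q t la i1 hq ht hOC1.
have hn1 := nfun_incr la i1 hOC1.
have hn1' := nfun'_incr la i1 hOC1.
rewrite -/(addcell la s) hnth1 in Ha1 Hb1 hn1'.
rewrite -/(addcell la s) in hn1.
set nu := addcell la s in Ha1 Hb1 hn1 hn1' *.
rewrite /pcol /pbarcol /prs /pbarrs /alpha_s /alphabar_s.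
case: r hr => [|r] hr /=.
  have hsk : nskew nu la = i1 by rewrite /nskew hn1; lia.
  have hh : hsum la s.+1 (dnum la) = upart la s.+1.
    by rewrite hsum_tel // ?u_last ?subn0 //; lia.
  rewrite /Pstep /Pbarstep hsk hh Ha1 Hb1 -exprnP exprVn.
  have := expf_neq0 i1 ht; move: (t ^+ i1) => T hT.
  split; field; exact: hT.
have hr' : (0 < r.+1 <= dnum la)%N by lia.
have [hE hOC2 hnth2 hv2] := remcell_facts la r.+1 hp hr'.
set i2 := (vsum la 1 r.+1).-1 in hE hOC2 hnth2 hv2.
set mu := remcell la r.+1 in hE hOC2 hnth2 hv2 *.
have Ha2 := alpha_incr _ q t mu i2 hq ht hOC2.
have Hb2 := alphabar_incr _ q t mu i2 hq ht hOC2.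
have hn2 := nfun_incr mu i2 hOC2.
have hn2' := nfun'_incr mu i2 hOC2.
rewrite hE hnth2 in Ha2 Hb2 hn2'.
rewrite hE in hn2.
set X2 := (upart la r.+1).-1 in Ha2 Hb2 hn2'.
set X1 := upart la s.+1 in Ha1 Hb1 hn1'.
have hA : X2%:Z = X1%:Z + Aexp nu la mu by rewrite /Aexp /nskew' hn1' hn2'; lia.
have hB : i1%:Z = i2%:Z + Bexp nu la mu by rewrite /Bexp /nskew hn1 hn2; lia.
have hcore a b := core _ q t a b X1 X2 i1 i2 _ _ hq ht h10 h01 hA hB.
rewrite /Ptrans /Pbartrans /beta /betabar Ha1 Hb1 Ha2 Hb2.
rewrite -[gamma q^-1 t^-1 nu la mu]/(G q^-1 t^-1 (Aexp nu la mu) (Bexp nu la mu)).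
rewrite !hcore /beta_r /betabar_r /beta /betabar -/mu.
set A := Aexp nu la mu in hA *.
set B := Bexp nu la mu in hB *.
clearbody A B.
have htu : t \is a GRing.unit by rewrite unitfE.
have hqu : q \is a GRing.unit by rewrite unitfE.
have hur := u_pos la r.+1 hp hr'.
suff key : forall X, q ^ A * t ^ B * t ^ B / t * X / G q t A B =
  tau_col q t la r.+1 s * X / gammap q t la r.+1 s by split; apply: key.
move=> X; rewrite /tau_col /gammap.
case: (leqP r.+1 s) => hrs.
- have hh0 := hsum_tel la r.+1 s hp ltac:(lia).
  have hlt := u_next_lt la r.+1 hp hr'.
  have hmo := u_mono la r.+2 s.+1 hp ltac:(lia).
  have hvs := vsum_split la r.+1 s hrs.
  have hh : (hsum la r.+1 s)%:Z = A + 1.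
    rewrite hh0; move: hA; rewrite /X2 /X1; lia.
  have hv : (vsum la r.+2 s)%:Z = B - 1.
    move: hB hvs; rewrite -/i1 hv2; lia.
  rewrite hh hv addrK subrK.
  have -> : (-1 + (A + 1) = A)%R by ring.
  have -> : (1 + 2 * (B - 1) = B + B + (-1))%R by ring.
  rewrite !(exprzDr htu) exprN1 G_brk.
  rewrite (mulrC (brk q t A B)) (mulrC (brk q t 1 0)).
  by rewrite !mulrA.
- have hh0 := hsum_tel la s.+1 r hp ltac:(lia).
  have hmo := u_mono la s.+1 r.+1 hp ltac:(lia).
  have hvs := vsum_split la s r.+1 ltac:(lia).
  have hh : (hsum la s.+1 r)%:Z = - (A + 1).
    rewrite hh0; move: hA; rewrite /X2 /X1; lia.
  have hv : (vsum la s.+1 r.+1)%:Z = - (B - 1).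
    move: hB hvs; rewrite -/i1 hv2; lia.
  rewrite /= hh hv.
  have -> : (- (A + 1) + 1 = - A)%R by ring.
  have -> : (- (B - 1) - 1 = - B)%R by ring.
  rewrite !brk_neg // -invr_expz G_brk !(exprzDr htu) !(exprzDr hqu) expr1z exprN1.
  have := expfz_neq0 A hq; have := expfz_neq0 B ht.
  move: (q ^ A) (t ^ B) (brk q t A B) (brk q t (A + 1) (B - 1)) (brk q t 1 0) (brk q t 0 1) h10 h01
    => QA TB b1 b2 b3 b4 h3 h4 hTB hQA.
  case: (eqVneq b1 0) => [->|hb1]; first by rewrite !(mulr0, mul0r, invr0).
  case: (eqVneq b2 0) => [->|hb2]; first by rewrite !(mulr0, mul0r, invr0).
  field.
  by rewrite hq ht hTB hQA hb1 hb2 h3 h4 !oppr_eq0 oner_eq0 ht.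
Qed.
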